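(* Let $\Gamma=(N,A,u)$ be a finite game and $\mu\in\Delta A$. Then $\mu$ is directly implementable if and only if $\mu\in\mathcal{I}$, where $\mathcal{I}=\bigcup_{q\in\mathrm{CE}(\Gamma)}\mathcal{I}_q$ and $\mathcal{I}_q=\{\mu'\in\Delta A:\mathrm{supp}(\mu')\subseteq\mathrm{supp}(q),\ \mathbb{E}_{\mu'}[\log q]=\mathbb{E}_q[\log q]\}$.
   Context: A finite game $\Gamma=(N,A,u)$ has a finite set of players $N$, finite action sets $A_i$, $A=\times_iA_i$, utilities $u_i:A\to\mathbb{R}$ (extended multilinearly to mixed profiles). $\mathrm{CE}(\Gamma)$ is the set of correlated equilibria: $p\in\Delta A$ such that for all $i$, all $a_i$ with $\sum_{a_{-i}}p_{a_i,a_{-i}}>0$, all $b\in A_i$, $\sum_{a_{-i}}p_{a_i,a_{-i}}[u_i(a_i,a_{-i})-u_i(b,a_{-i})]\ge0$. Convention $0\log0=0$. A partially specified data-generating process is $\mathcal{D}=(M,\eta,\mathcal{F})$ with $M=\times_iM_i$ finite, $\eta\in\Delta M$, $\mathcal{F}\subseteq\{f:M\to\mathbb{R}\}$; with $\Delta_{\mathcal{D}}=\{q\in\Delta M:\sum_mq_mf(m)=\sum_m\eta_mf(m)\ \forall f\in\mathcal{F}\}$, the belief is the unique maximizer $q$ of $-\sum_mq_m\log q_m$ over $\Delta_{\mathcal{D}}$. A strategy profile is $\sigma=(\sigma_i)$, $\sigma_i:M_i\to\Delta A_i$, $\sigma(a\mid m)=\prod_i\sigma_i(a_i\mid m_i)$,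 $(\eta\circ\sigma)(a)=\sum_m\eta_m\sigma(a\mid m)$. $\mu$ is implemented by $\mathcal{D}$ via $\sigma$ if (i) $q$ is the maximum-entropy belief; (ii) for all $i$, all $m_i$ with positive $q$-marginal, all $a_i'$: $\sum_{m_{-i}}q_{m_i,m_{-i}}[u_i(\sigma_i(m_i),\sigma_{-i}(m_{-i}))-u_i(a_i',\sigma_{-i}(m_{-i}))]\ge0$; (iii) $\mu=\eta\circ\sigma$. An outcome $\mu$ is directly implementable if it is implemented in this sense by some $\mathcal{D}=(M,\eta,\mathcal{F})$ with $M=A$ (i.e. $M_i=A_i$) and obedient strategies $\sigma_i(a_i)=$ the point mass on $a_i$ for every $i$. *)

(* Defs.v *)
From mathcomp Require Import all_boot all_order all_algebra.
From mathcomp Require Import reals exp.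
Set Implicit Arguments. Unset Strict Implicit. Unset Printing Implicit Defensive.
Import Order.TTheory GRing.Theory Num.Theory.
Local Open Scope ring_scope.

Section Game.
Variable R : realType.

Definition is_dist (T : finType) (p : T -> R) : Prop :=
  (forall t, 0 <= p t) /\ \sum_(t : T) p t = 1.

Definition xlogy (x y : R) : R := if x == 0 then 0 else x * ln y.

Definition entropy (T : finType) (q : T -> R) : R := - \sum_(t : T) xlogy (q t) (q t).

Definition prof (I : finType) (A : I -> finType) := {dffun forall i, A i}.

Definition upd (I : finType) (A : I -> finType) (a : prof A) (i : I) (b : A i)
  : prof A := finfun (@dfwith I A (fun j => a j) i b).
Arguments upd {I A} a i b.

Definition CE (I : finType) (A : I -> finType) (u : I -> prof A -> R)
  (p : prof A -> R) : Prop :=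
  is_dist p /\
  forall (i : I) (ai : A i),
    0 < \sum_(a : prof A | a i == ai) p a ->
    forall b : A i,
      0 <= \sum_(a : prof A | a i == ai) p a * (u i a - u i (upd a i b)).

Definition is_strategy (I : finType) (A M : I -> finType)
  (sigma : forall i, M i -> A i -> R) : Prop :=
  forall i (mi : M i), is_dist (sigma i mi).

Definition sprob (I : finType) (A M : I -> finType)
  (sigma : forall i, M i -> A i -> R) (a : prof A) (m : prof M) : R :=
  \prod_(j : I) sigma j (m j) (a j).

Definition EU (I : finType) (A M : I -> finType) (u : I -> prof A -> R)
  (sigma : forall i, M i -> A i -> R) (i : I) (m : prof M) : R :=
  \sum_(a : prof A) sprob sigma a m * u i a.

(** u_i(a_i', sigma_{-i}(m_{-i})), multilinear extension *)
Definition EUdev (I : finType) (A M : I -> finType) (u : I -> prof A -> R)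
  (sigma : forall i, M i -> A i -> R) (i : I) (ai' : A i) (m : prof M) : R :=
  \sum_(a : prof A | a i == ai')
     (\prod_(j : I | j != i) sigma j (m j) (a j)) * u i a.

Definition DeltaD (I : finType) (M : I -> finType) (eta : prof M -> R)
  (F : (prof M -> R) -> Prop) (q : prof M -> R) : Prop :=
  is_dist q /\
  forall f, F f -> \sum_(m : prof M) q m * f m = \sum_(m : prof M) eta m * f m.

Definition maxent_belief (I : finType) (M : I -> finType) (eta : prof M -> R)
  (F : (prof M -> R) -> Prop) (q : prof M -> R) : Prop :=
  DeltaD eta F q /\
  (forall q', DeltaD eta F q' -> entropy q' <= entropy q) /\
  (forall q', DeltaD eta F q' ->
     (forall q'', DeltaD eta F q'' -> entropy q'' <= entropy q') -> q' = q).

Definition implements (I : finType) (A M : I -> finType) (u : I -> prof A -> R)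
  (eta : prof M -> R) (F : (prof M -> R) -> Prop)
  (sigma : forall i, M i -> A i -> R) (q : prof M -> R) (mu : prof A -> R)
  : Prop :=
  maxent_belief eta F q /\
  (forall (i : I) (mi : M i),
     0 < \sum_(m : prof M | m i == mi) q m ->
     forall ai' : A i,
       0 <= \sum_(m : prof M | m i == mi)
              q m * (EU u sigma i m - EUdev u sigma ai' m)) /\
  (forall a : prof A, mu a = \sum_(m : prof M) eta m * sprob sigma a m).

Definition obedient (I : finType) (A : I -> finType) : forall i, A i -> A i -> R :=
  fun i mi ai => if ai == mi then 1 else 0.

Definition directly_implementable (I : finType) (A : I -> finType)
  (u : I -> prof A -> R) (mu : prof A -> R) : Prop :=
  exists (eta : prof A -> R) (F : (prof A -> R) -> Prop) (q : prof A -> R),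
    is_dist eta /\ implements u eta F (@obedient I A) q mu.

Definition Iq (I : finType) (A : I -> finType) (q mu' : prof A -> R) : Prop :=
  is_dist mu' /\
  (forall a, mu' a != 0 -> q a != 0) /\
  \sum_(a : prof A) xlogy (mu' a) (q a) = \sum_(a : prof A) xlogy (q a) (q a).

End Game.

(* Main.v *)
Require Import Defs.
From mathcomp Require Import all_boot all_order all_algebra.
From mathcomp Require Import reals exp.
From mathcomp Require Import ring lra.
Import Order.TTheory GRing.Theory Num.Theory.
Local Open Scope ring_scope.

Section Aux.
Variable R : realType.

Lemma ln_le_sub1 (z : R) : 0 < z -> ln z <= z - 1.
Proof.
move=> z0; have h := @le_ln1Dx R (z - 1).
rewrite (_ : 1 + (z - 1) = z) in h; last by ring.
apply: h; lra.
Qed.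

Lemma ln_lt_sub1 (z : R) : 0 < z -> z != 1 -> ln z < z - 1.
Proof.
move=> z0 z1; have h : ln z != 0 by rewrite ln_eq0.
have := expR_gt1Dx h; rewrite lnK ?posrE //; lra.
Qed.

Lemma xlogyE (x y : R) : xlogy x y = x * ln y.
Proof. by rewrite /xlogy; case: eqP => [->|]; rewrite ?mul0r. Qed.

Lemma P1 (x y : R) : 0 < x -> 0 <= y ->
  x * ln x - y * ln y >= -(y-x) - (y-x)^+2/x - (y-x)*ln x.
Proof.
move=> x0; rewrite le_eqVlt => /orP[/eqP<-|y0].
  rewrite mul0r subr0 sub0r opprK expr2 mulNr mulrN opprK.
  rewrite -mulrA divff ?gt_eqF // mulr1; lra.
have hk : ln y = ln x + ln (y / x) by rewrite -lnM ?posrE ?divr_gt0 // mulrCA divff ?gt_eqF // mulr1.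
have hl : ln (y / x) <= y / x - 1 by apply: ln_le_sub1; rewrite divr_gt0.
have hm : y * ln (y / x) <= y * (y / x - 1) by rewrite ler_wpM2l // ltW.
have he : y * (y / x - 1) = (y - x)^+2/x + (y - x).
  by field; rewrite gt_eqF.
rewrite hk; lra.
Qed.

Lemma P2 (x y : R) : 0 < x -> 0 < y ->
  y * ln y - y * ln x >= y - x.
Proof.
move=> x0 y0.
have hk : ln x - ln y = ln (x / y) by rewrite ln_div ?posrE.
have hl : ln (x / y) <= x / y - 1 by apply: ln_le_sub1; rewrite divr_gt0.
have hm : y * ln (x / y) <= y * (x / y - 1) by rewrite ler_wpM2l // ltW.
have he : y * (x / y - 1) = x - y by field; rewrite gt_eqF.
have : y * (ln x - ln y) <= x - y by rewrite hk -he.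
rewrite mulrBr; lra.
Qed.

Lemma P2s (x y : R) : 0 < x -> 0 < y -> x != y ->
  y * ln y - y * ln x > y - x.
Proof.
move=> x0 y0 xy.
have hk : ln x - ln y = ln (x / y) by rewrite ln_div ?posrE.
have hl : ln (x / y) < x / y - 1.
  apply: ln_lt_sub1; rewrite ?divr_gt0 //.
  apply: contra xy => /eqP h; apply/eqP.
  by rewrite -[x](divfK (x:=y)) ?gt_eqF // h mul1r.
have hm : y * ln (x / y) < y * (x / y - 1) by rewrite ltr_pM2l.
have he : y * (x / y - 1) = x - y by field; rewrite gt_eqF.
have : y * (ln x - ln y) < x - y by rewrite hk -he.
rewrite mulrBr; lra.
Qed.

End Aux.

Section G.
Variables (R : realType) (I : finType) (A : I -> finType).

Lemma sprob_ob (a m : prof A) : sprob (@obedient R I A) a m = (a == m)%:R :> R.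
Proof.
rewrite /sprob /obedient; case: eqP => [->|ne].
  by rewrite big1 // => j _; rewrite eqxx.
case: (pickP (fun j => a j != m j)) => [j hj|h].
  by rewrite (bigD1 j) //= (negbTE hj) mul0r.
exfalso; apply: ne; apply/ffunP => j; apply/eqP.
by have := h j => /= /negbFE.
Qed.

Lemma sum_pick (F : prof A -> R) (m : prof A) :
  \sum_(a : prof A) (a == m)%:R * F a = F m.
Proof.
rewrite (bigD1 m) //= eqxx mul1r big1 ?addr0 // => a /negbTE ->.
by rewrite mul0r.
Qed.

Lemma EU_ob u i m : EU u (@obedient R I A) i m = u i m :> R.
Proof. by rewrite /EU; under eq_bigr do rewrite sprob_ob; rewrite sum_pick. Qed.

Lemma upd_at (m : prof A) i b : (@upd _ _ m i b) i = b.
Proof. by rewrite /upd ffunE dfwith_in. Qed.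

Lemma upd_out (m : prof A) i b j : i != j -> (@upd _ _ m i b) j = m j.
Proof. by move=> h; rewrite /upd ffunE dfwith_out. Qed.

Lemma EUdev_ob u i b m : EUdev u (@obedient R I A) b m = u i ((@upd _ _ m i b)) :> R.
Proof.
rewrite /EUdev.
have e : forall a : prof A, a i == b ->
   \prod_(j | j != i) @obedient R I A j (m j) (a j) = (a == (@upd _ _ m i b))%:R :> R.
  move=> a /eqP hai; rewrite /obedient; case: eqP => [->|ne].
    by rewrite big1 // => j ji; rewrite upd_out 1?eq_sym // eqxx.
  case: (pickP (fun j => (j != i) && (a j != m j))) => [j /andP[ji hj]|h].
    by rewrite (bigD1 j) //= (negbTE hj) mul0r.
  exfalso; apply: ne; apply/ffunP => j.
  case: (eqVneq j i) => [->|ji]; first by rewrite upd_at.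
  rewrite upd_out 1?eq_sym //; apply/eqP.
  by have := h j; rewrite ji /= => /negbFE.
rewrite (eq_bigr (fun a => (a == (@upd _ _ m i b))%:R * u i a)); last first.
  by move=> a ha; rewrite e.
rewrite (bigD1 ((@upd _ _ m i b))) /=; last by rewrite upd_at.
rewrite eqxx mul1r big1 ?addr0 // => a /andP[_ /negbTE ->]; by rewrite mul0r.
Qed.

Lemma obed_iff u (q : prof A -> R) :
  (forall (i : I) (mi : A i),
     0 < \sum_(m : prof A | m i == mi) q m ->
     forall ai' : A i,
       0 <= \sum_(m : prof A | m i == mi)
              q m * (EU u (@obedient R I A) i m - EUdev u (@obedient R I A) ai' m)) <->
  (forall (i : I) (ai : A i),
    0 < \sum_(a : prof A | a i == ai) q a ->
    forall b : A i,
      0 <= \sum_(a : prof A | a i == ai) q a * (u i a - u i ((@upd _ _ a i b)))).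
Proof.
split=> h i ai hp b.
  by have := h i ai hp b; under eq_bigr do rewrite EU_ob EUdev_ob.
by under eq_bigr do rewrite EU_ob EUdev_ob; apply: h.
Qed.

End G.

Section A.
Variables (R : realType) (T : finType).

Lemma entropyE (q : T -> R) : entropy q = - \sum_a q a * ln (q a).
Proof. by rewrite /entropy; under eq_bigr do rewrite xlogyE. Qed.

Lemma dist_le1 (q : T -> R) a : is_dist q -> q a <= 1.
Proof.
move=> [q0 q1]; rewrite -q1 (bigD1 a) //= lerDl; exact: sumr_ge0.
Qed.

Lemma gibbs (q q' : T -> R) : is_dist q -> is_dist q' ->
  (forall a, q a = 0 -> q' a = 0) ->
  \sum_a q' a * ln (q a) = \sum_a q a * ln (q a) ->
  entropy q' <= entropy q /\ (entropy q <= entropy q' -> q' = q).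
Proof.
move=> [q0 q1] [p0 p1] hs he.
pose g := fun a => q' a * ln (q' a) - q' a * ln (q a) - (q' a - q a).
have hg : forall a, 0 <= g a.
  move=> a; rewrite /g subr_ge0; case: (eqVneq (q' a) 0) => [->|nz].
    rewrite !mul0r subrr; have := q0 a; lra.
  have pp : 0 < q' a by rewrite lt_def nz p0.
  have qp : 0 < q a.
    rewrite lt_def q0 andbT; apply/eqP => /hs; exact/eqP.
  exact: P2.
have hsum : \sum_a g a = entropy q - entropy q'.
  rewrite /g !entropyE !sumrB he p1 q1; lra.
split.
  have : 0 <= \sum_a g a by apply: sumr_ge0 => a _; exact: hg.
  rewrite hsum; lra.
move=> hle.
have s0 : \sum_a g a = 0.
  apply/eqP; rewrite eq_le; apply/andP; split; first by rewrite hsum; lra.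
  exact: sumr_ge0.
have h0 := psumr_eq0P (fun a _ => hg a) s0.
apply: boolp.funext => a; case: (eqVneq (q' a) 0) => [e|nz].
  have := h0 a isT; rewrite /g e !mul0r; lra.
have pp : 0 < q' a by rewrite lt_def nz p0.
have qp : 0 < q a.
  rewrite lt_def q0 andbT; apply/eqP => /hs; exact/eqP.
case: (eqVneq (q a) (q' a)) => [->//|ne].
have := @P2s R _ _ qp pp ne; have := h0 a isT; rewrite /g; lra.
Qed.


Lemma maxent_cond (q mu : T -> R) : is_dist q -> is_dist mu ->
 (forall t : R, is_dist (fun a => q a + t * (mu a - q a)) ->
    entropy (fun a => q a + t * (mu a - q a)) <= entropy q) ->
 (forall a, mu a != 0 -> q a != 0) /\
 \sum_a xlogy (mu a) (q a) = \sum_a xlogy (q a) (q a).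
Proof.
move=> Dq Dmu H; have [q0 q1] := Dq; have [m0 m1] := Dmu.
have sum_qt : forall t, \sum_a (q a + t * (mu a - q a)) = 1.
  move=> t; rewrite big_split /= -mulr_sumr sumrB m1 q1 subrr mulr0 addr0 //.
have key : forall t, is_dist (fun a => q a + t * (mu a - q a)) ->
   \sum_a (q a * ln (q a) - (q a + t * (mu a - q a)) * ln (q a + t * (mu a - q a))) <= 0.
  move=> t Dt; have := H t Dt; rewrite !entropyE sumrB; lra.
have conv : forall t, 0 <= t <= 1 -> is_dist (fun a => q a + t * (mu a - q a)).
  move=> t /andP[t0 t1]; split => [a|]; last exact: sum_qt.
  have := q0 a; have := m0 a; nra.
have supp : forall a, mu a != 0 -> q a != 0.
  move=> b hb; apply/negP => /eqP qb.
  pose Ka := fun a => if q a == 0 then 0 else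
     `|mu a - q a| + (mu a - q a)^+2 / q a + `|(mu a - q a) * ln (q a)|.
  pose K := \sum_a Ka a.
  have K0 : 0 <= K.
    apply: sumr_ge0 => a _; rewrite /Ka; case: ifP => // _.
    by rewrite !addr_ge0 // divr_ge0 ?sqr_ge0.
  have mb : 0 < mu b by rewrite lt_def hb m0.
  have bound : forall t, 0 < t <= 1 -> - (mu b * ln (t * mu b)) <= K.
    move=> t /andP[t0 t1].
    have tt : 0 <= t <= 1 by rewrite ltW.
    have Dt := conv t tt; have hk := key t Dt; have [Dt0 _] := Dt.
    have le : \sum_a ((if a == b then - (t * mu b * ln (t * mu b)) else 0) - t * Ka a)
       <= \sum_a (q a * ln (q a) - (q a + t * (mu a - q a)) * ln (q a + t * (mu a - q a))).
      apply: ler_sum => a _.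
      case: (eqVneq a b) => [->|ab].
        rewrite /Ka qb eqxx !(mulr0, subr0, mul0r, add0r, sub0r); lra.
      case: (eqVneq (q a) 0) => [qa|qa].
        rewrite /Ka qa eqxx ?(mulr0, subr0, mul0r, add0r, sub0r, oppr0).
        have h1 : t * mu a <= 1 by apply: mulr_ile1; [exact: ltW | exact: m0 | done | exact: dist_le1].
        have h2 : ln (t * mu a) <= 0 by apply: ln_le0.
        have h3 : 0 <= t * mu a by rewrite mulr_ge0 // ltW.
        by rewrite addr0 oppr_ge0; exact: mulr_ge0_le0.
      have qp : 0 < q a by rewrite lt_def qa q0.
      have yp := Dt0 a.
      rewrite /Ka (negbTE qa).
      have hP := @P1 R _ _ qp yp.
      have e : q a + t * (mu a - q a) - q a = t * (mu a - q a) by ring.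
      rewrite e in hP.
      have e2 : (t * (mu a - q a))^+2 / q a = t^+2 * ((mu a - q a)^+2 / q a).
        by field.
      rewrite e2 in hP.
      have E0 : 0 <= (mu a - q a)^+2 / q a by rewrite divr_ge0 ?sqr_ge0 ?ltW.
      have f1 : t * (mu a - q a) <= t * `|mu a - q a| by apply: ler_wpM2l; [exact: ltW | exact: ler_norm].
      have f2 : t^+2 * ((mu a - q a)^+2 / q a) <= t * ((mu a - q a)^+2 / q a).
        by apply: ler_wpM2r => //; rewrite expr2 ler_piMr // ltW.
      have f3 : t * ((mu a - q a) * ln (q a)) <= t * `|(mu a - q a) * ln (q a)|.
        by apply: ler_wpM2l; [exact: ltW | exact: ler_norm].
      lra.
    have sL : \sum_a ((if a == b then - (t * mu b * ln (t * mu b)) else 0) - t * Ka a)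
       = - (t * mu b * ln (t * mu b)) - t * K.
      by rewrite sumrB -big_mkcond /= big_pred1_eq -mulr_sumr.
    have : t * (- (mu b * ln (t * mu b)) - K) <= 0.
      rewrite sL in le; lra.
    by rewrite pmulr_rle0 // subr_le0.
  pose t := sequences.expR (- (K / mu b) - 1).
  have Kmb : 0 <= K / mu b by rewrite divr_ge0 // ltW.
  have t0 : 0 < t by rewrite expR_gt0.
  have t1 : t <= 1 by rewrite expR_le1; lra.
  have hb2 := bound t (introT andP (conj t0 t1)).
  have lnt : ln (t * mu b) = - (K / mu b) - 1 + ln (mu b).
    by rewrite lnM ?posrE // expRK.
  rewrite lnt in hb2.
  have e : mu b * (K / mu b) = K by rewrite mulrC divfK // gt_eqF.
  have l0 : ln (mu b) <= 0 by apply: ln_le0; exact: dist_le1.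
  have l1 : mu b * ln (mu b) <= 0 by apply: mulr_ge0_le0 => //; exact: ltW.
  have : - (mu b * (- (K / mu b) - 1 + ln (mu b))) = K + mu b - mu b * ln (mu b).
    by rewrite -{2}e; ring.
  lra.
split => //.
have ma0 : forall a, q a = 0 -> mu a = 0.
  move=> a qa; apply/eqP; apply/negPn/negP => /supp; by rewrite qa eqxx.
pose s0 := \prod_a (if q a == 0 then 1 else q a).
have fac : forall a, 0 <= (if q a == 0 then 1 else q a) <= 1.
  move=> a; case: ifP => _; rewrite ?ler01 ?lexx //.
  by rewrite q0 dist_le1.
have s0p : 0 < s0.
  apply: prodr_gt0 => a _; case: eqP => // /eqP qa.
  by rewrite lt_def qa q0.
have s01 : s0 <= 1 by apply: prodr_ile1 => a _; exact: fac.
have s0q : forall a, q a != 0 -> s0 <= q a.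
  move=> a qa; rewrite /s0 (bigD1 a) //= (negbTE qa).
  apply: ler_piMr; first exact: q0.
  by apply: prodr_ile1 => c _; exact: fac.
have negconv : forall s, 0 <= s <= s0 -> is_dist (fun a => q a + (- s) * (mu a - q a)).
  move=> s /andP[sa sb]; split => [a|]; last exact: sum_qt.
  case: (eqVneq (q a) 0) => [qa|qa].
    by rewrite qa (ma0 a qa) subrr mulr0 addr0.
  have h1 := s0q a qa.
  have h2 : s * mu a <= s by apply: ler_piMr => //; exact: dist_le1.
  have h3 : 0 <= s * q a by rewrite mulr_ge0.
  lra.
pose C := \sum_a (if q a == 0 then 0 else (mu a - q a)^+2 / q a).
pose L := \sum_a (mu a - q a) * ln (q a).
have C0 : 0 <= C.
  apply: sumr_ge0 => a _; case: eqP => // /eqP qa.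
  by rewrite divr_ge0 ?sqr_ge0 ?q0.
have quad : forall t, is_dist (fun a => q a + t * (mu a - q a)) ->
    - (t^+2 * C) - t * L <= 0.
  move=> t Dt; have hk := key t Dt; have [Dt0 _] := Dt.
  have le : \sum_a (- (t * (mu a - q a))
        - t^+2 * (if q a == 0 then 0 else (mu a - q a)^+2 / q a)
        - t * ((mu a - q a) * ln (q a)))
     <= \sum_a (q a * ln (q a) - (q a + t * (mu a - q a)) * ln (q a + t * (mu a - q a))).
    apply: ler_sum => a _.
    case: (eqVneq (q a) 0) => [qa|qa].
      rewrite qa (ma0 a qa) ?(subrr, mulr0, mul0r, addr0, oppr0, subr0).
      by rewrite lexx.
    have qp : 0 < q a by rewrite lt_def qa q0.
    have hP := @P1 R _ _ qp (Dt0 a).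
    have e : q a + t * (mu a - q a) - q a = t * (mu a - q a) by ring.
    rewrite e in hP.
    have e2 : (t * (mu a - q a))^+2 / q a = t^+2 * ((mu a - q a)^+2 / q a).
      by field.
    rewrite e2 in hP; lra.
  have sd : \sum_a (mu a - q a) = 0 by rewrite sumrB m1 q1 subrr.
  have sL : \sum_a (- (t * (mu a - q a))
        - t^+2 * (if q a == 0 then 0 else (mu a - q a)^+2 / q a)
        - t * ((mu a - q a) * ln (q a))) = - (t^+2 * C) - t * L.
    rewrite !sumrB sumrN -!mulr_sumr sd mulr0 oppr0 sub0r //.
  rewrite sL in le; lra.
have hpos : forall t, 0 < t <= 1 -> - (t * C) <= L.
  move=> t /andP[t0 t1].
  have := quad t (conv t (introT andP (conj (ltW t0) t1))).
  have -> : - (t^+2 * C) - t * L = t * (- (t * C) - L) by ring.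
  by rewrite pmulr_rle0 // subr_le0 => h; lra.
have hneg : forall s, 0 < s <= s0 -> L <= s * C.
  move=> s /andP[sp ss].
  have := quad (- s) (negconv s (introT andP (conj (ltW sp) ss))).
  have -> : - ((- s)^+2 * C) - (- s) * L = s * (L - s * C) by ring.
  by rewrite pmulr_rle0 // subr_le0.
have L0 : L = 0.
  apply/eqP; apply/negP => /negP Lnz.
  have aL : 0 < `|L| by rewrite normr_gt0.
  have C1 : 0 < C + 1 by lra.
  pose s := Num.min s0 (`|L| / (C + 1)).
  have sp : 0 < s by rewrite lt_min s0p divr_gt0.
  have ss : s <= s0 by rewrite ge_min lexx.
  have s1 : s <= 1 := le_trans ss s01.
  have sC : s * C < `|L|.
    have h1 : s * C <= (`|L| / (C + 1)) * C.
      by apply: ler_wpM2r => //; rewrite ge_min lexx orbT.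
    have h2 : (`|L| / (C + 1)) * C = `|L| - `|L| / (C + 1).
      by field; rewrite gt_eqF.
    have h3 : 0 < `|L| / (C + 1) by rewrite divr_gt0.
    lra.
  case: (ltrgtP L 0) => hL.
  - have := hpos s (introT andP (conj sp s1)); rewrite ltr0_norm // in sC; lra.
  - have := hneg s (introT andP (conj sp ss)); rewrite gtr0_norm // in sC; lra.
  - by rewrite hL eqxx in Lnz.
under eq_bigr do rewrite xlogyE; under [RHS]eq_bigr do rewrite xlogyE.
apply/eqP; rewrite -subr_eq0 -sumrB; apply/eqP.
rewrite -[RHS]L0; apply: eq_bigr => a _; by rewrite mulrBl.
Qed.

End A.

Theorem proposition2 (R : realType) (I : finType) (A : I -> finType)
  (u : I -> prof A -> R) (mu : prof A -> R) :
  is_dist mu ->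
  (directly_implementable u mu <-> exists q : prof A -> R, CE u q /\ Iq q mu).
Proof.
move=> Dmu; split.
- move=> [eta [F [q [Deta [[[Dq Fq] [Hmax _]] [Hob Hmu]]]]]].
  have Hme : forall a, mu a = eta a.
    move=> a; rewrite Hmu.
    under eq_bigr do rewrite sprob_ob eq_sym mulrC.
    by rewrite sum_pick.
  exists q; split.
    split => //; exact/obed_iff.
  split => //; apply: maxent_cond => // t Dt; apply: Hmax; split => // f Ff.
  rewrite (eq_bigr (fun m => q m * f m + t * (mu m * f m - q m * f m))); last first.
    by move=> m _; ring.
  rewrite big_split /= -mulr_sumr sumrB.
  have e1 : \sum_i mu i * f i = \sum_i eta i * f i by apply: eq_bigr => m _; rewrite Hme.
  by rewrite e1 Fq // subrr mulr0 addr0.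
- move=> [q [[Dq Hce] [_ [Hs He]]]].
  pose f1 := fun a => ln (q a).
  pose f2 := fun a => if q a == 0 then 1 else 0 : R.
  exists mu, (fun f => f = f1 \/ f = f2), q; split => //.
  have ma0 : forall a, q a = 0 -> mu a = 0.
    move=> a qa; apply/eqP; apply/negPn/negP => /Hs; by rewrite qa eqxx.
  have mu_f2 : \sum_a mu a * f2 a = 0.
    apply: big1 => a _; rewrite /f2; case: eqP => [/ma0 ->|_]; by rewrite ?mul0r ?mulr0.
  have q_f2 : \sum_a q a * f2 a = 0.
    apply: big1 => a _; rewrite /f2; case: eqP => [->|_]; by rewrite ?mul0r ?mulr0.
  have mu_f1 : \sum_a mu a * f1 a = \sum_a q a * f1 a.
    move: He; under eq_bigr do rewrite xlogyE; by under [RHS]eq_bigr do rewrite xlogyE.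
  have DQ : forall q', DeltaD mu (fun f => f = f1 \/ f = f2) q' ->
      [/\ is_dist q', (forall a, q a = 0 -> q' a = 0) &
        \sum_a q' a * ln (q a) = \sum_a q a * ln (q a)].
    move=> q' [Dq' Hc]; split => //.
      move=> a qa; have h := Hc f2 (or_intror erefl); rewrite mu_f2 in h.
      have h0 : forall a, true -> 0 <= q' a * f2 a.
        move=> c _; rewrite mulr_ge0 //; first by case: Dq' => + _; apply.
        by rewrite /f2; case: eqP.
      have := psumr_eq0P h0 h (i:=a) isT; by rewrite /f2 qa eqxx mulr1.
    by have := Hc f1 (or_introl erefl); rewrite mu_f1.
  have DDq : DeltaD mu (fun f => f = f1 \/ f = f2) q.
    split => // f [->|->]; [by rewrite mu_f1 | by rewrite q_f2 mu_f2].
  split.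
    split => //; split.
      move=> q' /DQ [D' S' E']; exact: (@gibbs _ _ q q' Dq D' S' E').1.
    move=> q' Dq'' Hm; have [D' S' E'] := DQ q' Dq''.
    apply: (@gibbs _ _ q q' Dq D' S' E').2; exact: (Hm q DDq).
  split; first exact/obed_iff.
  move=> a; under eq_bigr do rewrite sprob_ob eq_sym mulrC; by rewrite sum_pick.
Qed.
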